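(* The sequence $(h(n))_{n\ge0}$ is not strongly $3$-recursive. In fact, for any natural numbers $r<t$, the sequence $(h(3^tn))_{n\ge0}$ is not a linear combination of the sequences $(h(3^rn+a))_{n\ge0}$, $0\le a<3^r$.
   Context: Define $h:\mathbb N\to\mathbb N$ by $h(0)=0$; $h(n)=h(\lfloor n/3\rfloor)+(\lfloor n/3\rfloor \bmod 2)$ if $n>0$ and $n\equiv 0$ or $2\pmod 3$; and $h(n)=h(\lfloor n/9\rfloor)+1$ if $n\equiv1\pmod 3$. Here $x\bmod 2\in\{0,1\}$ is the least nonnegative remainder. A sequence $(f(n))_{n\ge 0}$ is strongly $k$-recursive if there exist natural numbers $r<t$ such that for every $b$ with $0\le b<k^t$, the sequence $(f(k^t n+b))_{n\ge 0}$ is a linear combination, with constant coefficients, of the sequences $(f(k^r n+a))_{n\ge0}$ with $0\le a<k^r$. *)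

(* Defs.v *)
From mathcomp Require Import all_boot all_order all_algebra zify.
Set Implicit Arguments. Unset Strict Implicit. Unset Printing Implicit Defensive.
Import GRing.Theory Num.Theory.

(* h via fuel: each recursive call strictly decreases n (when n > 0),
   so fuel n suffices; see h_eq0, h_eq1, h_eq02 below. *)
Fixpoint h_aux (fuel n : nat) : nat :=
  match fuel with
  | 0 => 0
  | S f =>
      if n == 0 then 0
      else if n %% 3 == 1 then h_aux f (n %/ 9) + 1
      else h_aux f (n %/ 3) + (n %/ 3) %% 2
  end.

Definition h (n : nat) : nat := h_aux n n.

Lemma h_aux_stable f g n : n <= f -> n <= g -> h_aux f n = h_aux g n.
Proof.
elim: f g n => [|f IH] [|g] n Hf Hg /=; try by (have -> : n = 0 by lia).
all: try done.
case: (n =P 0) => // n0.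
case: ifP => _; idtac.
all: rewrite (IH g) //; lia.
Qed.

Lemma h_eq0 : h 0 = 0. Proof. by []. Qed.

Lemma h_eq1 n : n %% 3 = 1 -> h n = h (n %/ 9) + 1.
Proof.
move=> H; rewrite /h; case: n H => [//|m] H /=.
by rewrite H /= (@h_aux_stable m (m.+1 %/ 9)) //; lia.
Qed.

Lemma h_eq02 n : 0 < n -> n %% 3 != 1 -> h n = h (n %/ 3) + (n %/ 3) %% 2.
Proof.
move=> Hp H; rewrite /h; case: n Hp H => [//|m] _ H /=.
by rewrite (negbTE H) (@h_aux_stable m (m.+1 %/ 3)) //; lia.
Qed.

Local Open Scope ring_scope.

Definition strongly_recursive (R : numFieldType) (k : nat) (f : nat -> R) : Prop :=
  exists r t : nat, (r < t)%N /\
    forall b : nat, (b < k ^ t)%N ->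
      exists c : nat -> R, forall n : nat,
        f (k ^ t * n + b)%N = \sum_(a < k ^ r) c a * f (k ^ r * n + a)%N.

(* Main.v *)
Require Import Defs.
From mathcomp Require Import all_boot all_order all_algebra zify ring.
Import GRing.Theory Num.Theory.

Lemma h_step (m : nat) : h m = h (m %/ 3) + odd m.
Proof.
elim/ltn_ind: m => m IH.
case: (posnP m) => [->|mp]; first by [].
have [q [s Hs Em]] : exists q, exists2 s, s < 3 & m = 3 * q + s.
  by exists (m %/ 3), (m %% 3); [rewrite ltn_mod | rewrite mulnC -divn_eq].
subst m.
have Hq : (3 * q + s) %/ 3 = q.
  by lia.
case: (s =P 1) => [s1|s1].
  subst s; rewrite h_eq1; last by lia.
  have -> : (3 * q + 1) %/ 9 = q %/ 3 by lia.
  rewrite Hq (IH q); last by lia.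
  rewrite oddD oddM /=; case: (odd q) => /=; lia.
rewrite h_eq02 //; last by apply/eqP; lia.
rewrite Hq oddD oddM /=.
have : s = 0 \/ s = 2 by lia.
case=> ->; rewrite ?addn0 /= ?addbF; case E: (odd q) => /=; rewrite ?modn2 ?E //.

Qed.

Fixpoint P (r a : nat) : nat :=
  match r with 0 => 0 | r'.+1 => odd a + P r' (a %/ 3) end.

Lemma P_le r a : P r a <= r.
Proof. elim: r a => [|r IH] a //=; have := IH (a %/ 3); case: (odd a); lia. Qed.

Lemma P0 r : P r 0 = 0.
Proof. by elim: r => //= r ->. Qed.

Lemma h_block r n a : a < 3 ^ r ->
  h (3 ^ r * n + a) = h n + (if odd n then r - P r a else P r a).
Proof.
elim: r a => [|r IH] a Ha.
  rewrite expn0 in Ha; have -> : a = 0 by lia.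
  by rewrite expn0 mul1n addn0 P0; case: (odd n); rewrite ?subn0 addn0.
rewrite h_step.
have -> : (3 ^ r.+1 * n + a) %/ 3 = 3 ^ r * n + a %/ 3.
  by rewrite expnS -mulnA; move: (3 ^ r * n) => x; lia.
rewrite IH; last by rewrite expnS in Ha; move: (3 ^ r) Ha => x; lia.
rewrite oddD oddM oddX /= -addnA; congr (_ + _).
have := P_le r (a %/ 3).
by case: (odd n); case: (odd a) => /=; lia.
Qed.

Lemma h1 : h 1 = 1. Proof. by []. Qed.
Lemma h4 : h 4 = 1. Proof. by []. Qed.

Local Open Scope ring_scope.

Lemma part2 (R : numFieldType) (r t : nat) : (r < t)%N ->
    ~ exists c : nat -> R, forall n : nat,
        (h (3 ^ t * n)%N)%:R = \sum_(a < 3 ^ r) c a * (h (3 ^ r * n + a)%N)%:R.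
Proof.
move=> rt [c Hc].
have Lt n : h (3 ^ t * n)%N = (h n + (if odd n then t else 0))%N.
  by rewrite -[(3 ^ t * n)%N]addn0 h_block ?expn_gt0 // P0; case: (odd n); rewrite ?subn0.
set S := \sum_(a < 3 ^ r) c a.
set S0 := \sum_(a < 3 ^ r) c a * (P r a)%:R.
have E0 := Hc 0%N; have E1 := Hc 1%N; have E4 := Hc 4%N.
rewrite Lt /= in E0; rewrite Lt /= in E1; rewrite Lt /= in E4.
have F0 : \sum_(a < 3 ^ r) c a * (h (3 ^ r * 0 + a))%:R = S0.
  by apply: eq_bigr => a _; rewrite h_block //= add0n.
have F1 : \sum_(a < 3 ^ r) c a * (h (3 ^ r * 1 + a))%:R = S *+ r.+1 - S0.
  rewrite /S /S0 -sumrMnl -sumrB; apply: eq_bigr => a _.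
  rewrite h_block //= h1 natrD natrB ?P_le // -mulr_natr; ring.
have F4 : \sum_(a < 3 ^ r) c a * (h (3 ^ r * 4 + a))%:R = S + S0.
  rewrite /S /S0 -big_split; apply: eq_bigr => a _.
  rewrite h_block //= h4 natrD; ring.
rewrite F0 h_eq0 addn0 in E0.
rewrite F4 h4 addn0 -E0 addr0 in E4.
move: E1; rewrite F1 h1 -E0 subr0 -E4 => /eqP.
by rewrite -[X in _ == X]/(r.+1)%:R eqr_nat; lia.
Qed.

Theorem mainTheorem11 (R : numFieldType) :
  ~ strongly_recursive 3 (fun n => (h n)%:R : R) /\
  forall r t : nat, (r < t)%N ->
    ~ exists c : nat -> R, forall n : nat,
        (h (3 ^ t * n)%N)%:R = \sum_(a < 3 ^ r) c a * (h (3 ^ r * n + a)%N)%:R.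
Proof.
split; last exact: part2.
move=> [r [t [rt H]]].
have [c Hc] := H 0%N (expn_gt0 3 t).
apply: (@part2 R r t rt); exists c => n; rewrite -Hc addn0 //.
Qed.
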